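(* Let $a,b$ be integers with $-a+1\le b\le -2$ and let $(T_n)_{n\ge0}$ be defined by $T_0=1$, $T_1=a$, $T_2=a^2+b$, $T_{n+3}=aT_{n+2}+bT_{n+1}+T_n$. Then every nonnegative integer $n$ can be uniquely expressed as $n=\sum_{i=0}^N d_iT_i$, where: - $d_i\in\{0,\dots,a-1\}$; - for all $j\ge k\ge 0$, $d_jd_{j-1}\cdots d_{j-k}\le_{\mathrm{lex}}(a-1)(a+b-1)(a+b)\cdots(a+b)$. Here the right-hand word has length $k+1$: it consists of $a-1$, then $a+b-1$, followed by $k-1$ copies of $a+b$ (truncated appropriately when $k\le1$). The relation $\le_{\mathrm{lex}}$ is the lexicographic order on words of equal length. *)

(* Defs.v *)
From HB Require Import structures.
From mathcomp Require Import all_boot all_order all_algebra.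
Set Implicit Arguments. Unset Strict Implicit. Unset Printing Implicit Defensive.
Import Order.TTheory GRing.Theory Num.Theory.
Local Open Scope ring_scope.

Fixpoint Tseq (a b : int) (n : nat) {struct n} : int :=
  match n with
  | 0%N => 1
  | 1%N => a
  | 2%N => a ^+ 2 + b
  | S ((S (S m as m1)) as m2) => a * Tseq a b m2 + b * Tseq a b m1 + Tseq a b m
  end.

Fixpoint lex_le (s t : seq int) : bool :=
  match s, t with
  | [::], [::] => true
  | x :: s', y :: t' => (x < y) || ((x == y) && lex_le s' t')
  | _, _ => false
  end.

Definition digit_word (d : nat -> int) (j k : nat) : seq int :=
  [seq d (j - i)%N | i <- iota 0 k.+1].

Definition bound_word (a b : int) (k : nat) : seq int :=
  match k with
  | 0%N => [:: a - 1]
  | S k' => (a - 1) :: (a + b - 1) :: nseq k' (a + b)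
  end.

Definition admissible (a b : int) (d : nat -> int) : Prop :=
  (forall i, 0 <= d i <= a - 1) /\
  (forall j k : nat, (k <= j)%N -> lex_le (digit_word d j k) (bound_word a b k)).

Definition represents (a b : int) (d : nat -> int) (n : nat) : Prop :=
  exists N : nat, (forall i, (N < i)%N -> d i = 0) /\
    (n%:Z = \sum_(i < N.+1) d i * Tseq a b i).

(* Main.v *)
Require Import Defs.
From HB Require Import structures.
From mathcomp Require Import all_boot all_order all_algebra.
From mathcomp Require Import ring lra zify.
Import Order.TTheory GRing.Theory Num.Theory.
Local Open Scope ring_scope.

Arguments Tseq : simpl never.
Lemma T0 (a b : int) : Tseq a b 0 = 1. Proof. by []. Qed.
Lemma T1 (a b : int) : Tseq a b 1 = a. Proof. by []. Qed.
Lemma T2 (a b : int) : Tseq a b 2 = a ^+ 2 + b. Proof. by []. Qed.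

Definition beta (a b : int) (t : nat) : int :=
  if t == 0%N then a - 1 else if t == 1%N then a + b - 1 else a + b.

Fixpoint vc (a b : int) (c m : nat) : int :=
  match m with
  | 0%N => beta a b c
  | m'.+1 => beta a b c * Tseq a b m + vc a b c.+1 m'
  end.

Lemma TS (a b : int) m : Tseq a b m.+3 = a * Tseq a b m.+2 + b * Tseq a b m.+1 + Tseq a b m.
Proof. by []. Qed.

Lemma vc_const (a b : int) c m : (2 <= c)%N -> vc a b c m = vc a b 2 m.
Proof.
elim: m c => [|m IH] c hc /=.
  by rewrite /beta; case: c hc => [|[|c]].
rewrite (IH c.+1) ?(IH 3) //; last exact: leqW.
by congr (_ * _ + _); rewrite /beta; case: c hc => [|[|c]].
Qed.

Lemma vc0_aux (a b : int) k : Tseq a b k.+3 - 1 =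
  (a-1) * Tseq a b k.+2 + (a+b-1) * Tseq a b k.+1 + vc a b 2 k.
Proof.
elim: k => [|k IH].
  rewrite /= /beta /= TS T0 T1 T2; ring.
have HW : vc a b 2 k = Tseq a b k.+3 - 1 - (a-1) * Tseq a b k.+2
   - (a+b-1) * Tseq a b k.+1 by rewrite IH; ring.
rewrite [vc _ _ _ _.+1]/= vc_const // HW TS /beta /=; ring.
Qed.

Lemma vc0 (a b : int) m : vc a b 0 m = Tseq a b m.+1 - 1.
Proof.
case: m => [|[|k]]; first by rewrite /= /beta /= T1.
  rewrite /= /beta /= T1 T2; ring.
rewrite vc0_aux /= /beta /=; ring.
Qed.

Lemma beta_ge0 (a b : int) t : - a + 1 <= b -> b <= -2 -> 0 <= beta a b t.
Proof. move=> h1 h2; rewrite /beta; case: ifP => _; [|case: ifP => _]; lia. Qed.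

Lemma vc_ge0 (a b : int) m : - a + 1 <= b -> b <= -2 ->
  (forall i, (i <= m)%N -> 0 <= Tseq a b i) -> forall c, 0 <= vc a b c m.
Proof.
move=> h1 h2; elim: m => [|m IH] HT c /=; first exact: beta_ge0.
rewrite addr_ge0 ?mulr_ge0 ?beta_ge0 ?HT //.
by apply: IH => i hi; apply: HT; rewrite ltnW.
Qed.

Lemma T_ge1 (a b : int) i : - a + 1 <= b -> b <= -2 -> 1 <= Tseq a b i.
Proof.
move=> h1 h2.
suff H : forall m i, (i <= m)%N -> 1 <= Tseq a b i by exact: (H i).
elim=> [|m IH] j; first by rewrite leqn0 => /eqP ->.
rewrite leq_eqVlt => /orP [/eqP ->|]; last exact: IH.
have := vc0 a b m.
have := @vc_ge0 a b m h1 h2 (fun i hi => le_trans ler01 (IH i hi)) 0%N.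
lia.
Qed.

Lemma vc_ge_head (a b : int) c m : - a + 1 <= b -> b <= -2 ->
  beta a b c * Tseq a b m <= vc a b c m.
Proof.
move=> h1 h2; case: m => [|m] /=; first by rewrite T0 mulr1.
rewrite lerDl vc_ge0 // => i _; exact: le_trans ler01 (T_ge1 _ _ _ h1 h2).
Qed.

Lemma T_step (a b : int) k : - a + 1 <= b -> b <= -2 -> Tseq a b k + 1 <= Tseq a b k.+1.
Proof.
move=> h1 h2.
have := vc0 a b k; have := vc_ge_head a b 0 k h1 h2; have := T_ge1 a b k h1 h2.
rewrite /beta /= => hT hv e.
have : Tseq a b k <= (a - 1) * Tseq a b k.
  by rewrite ler_peMl ?(le_trans ler01 hT) //; lia.
lia.
Qed.

Lemma T_mono (a b : int) i j : - a + 1 <= b -> b <= -2 -> (i <= j)%N -> Tseq a b i <= Tseq a b j.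
Proof.
move=> h1 h2; elim: j => [|j IH]; first by rewrite leqn0 => /eqP ->.
rewrite leq_eqVlt => /orP [/eqP ->//|/IH h].
by apply: le_trans h _; have := T_step a b j h1 h2; lia.
Qed.

Lemma T_gtn (a b : int) k : - a + 1 <= b -> b <= -2 -> (k%:Z < Tseq a b k.+1).
Proof.
move=> h1 h2; elim: k => [|k IH]; first by rewrite T1; lia.
have := T_step a b k.+1 h1 h2; lia.
Qed.

Lemma W_lt (a b : int) k : - a + 1 <= b -> b <= -2 -> vc a b 2 k < Tseq a b k.+1.
Proof.
move=> h1 h2; case: k => [|[|k]].
- rewrite /= /beta /= T1; lia.
- rewrite /= /beta /= T1 T2.
  have e : a ^+ 2 + b - ((a + b) * a + (a + b)) = (-b-1) * a by ring.
  have : a <= (-b-1) * a by rewrite ler_peMl; lia.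
  lia.
- have e := vc0_aux a b k.
  rewrite /=.
  rewrite (vc_const a b 4) //.
  rewrite /beta /=.
  have hT := T_ge1 a b k.+2 h1 h2; have hT2 := T_mono a b k.+1 k.+2 h1 h2 (leqnSn _).
  have : Tseq a b k.+2 <= (-b-1) * Tseq a b k.+2 by rewrite ler_peMl; lia.
  move: e; set W := vc a b 2 k; set X := Tseq a b k.+2; set Y := Tseq a b k.+1.
  set Z := Tseq a b k.+3.
  move=> e h.
  have e' : Z - ((a+b) * X + ((a+b) * Y + W)) = 1 + (-b-1) * X - Y.
    have -> : W = Z - 1 - (a - 1) * X - (a + b - 1) * Y by rewrite e; ring.
    ring.
  lia.
Qed.

Lemma vc_le_W (a b : int) c k : - a + 1 <= b -> b <= -2 -> vc a b c.+1 k <= vc a b 2 k.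
Proof.
move=> h1 h2; elim: k c => [|k IH] c /=.
  rewrite /beta /=; case: c => [|c] /=; lia.
rewrite [vc a b 3 k]vc_const // lerD ?IH //.
rewrite ler_wpM2r ?(le_trans ler01 (T_ge1 _ _ _ h1 h2)) //.
rewrite /beta /=; case: c => [|c] /=; lia.
Qed.

Definition val (a b : int) (d : nat -> int) (m : nat) : int :=
  \sum_(i < m.+1) d i * Tseq a b i.

Lemma valS (a b : int) d m : val a b d m.+1 = d m.+1 * Tseq a b m.+1 + val a b d m.
Proof. by rewrite /val big_ord_recr /= addrC. Qed.

Lemma val0 (a b : int) d : val a b d 0 = d 0%N.
Proof. by rewrite /val big_ord1 T0 mulr1. Qed.

Lemma val_eq (a b : int) d1 d2 m : (forall i, (i <= m)%N -> d1 i = d2 i) ->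
  val a b d1 m = val a b d2 m.
Proof. by move=> h; apply: eq_bigr => i _; rewrite h // -ltnS. Qed.

Lemma val_tail (a b : int) d N m : (forall i, (N < i)%N -> d i = 0) -> (N <= m)%N ->
  val a b d m = val a b d N.
Proof.
move=> h; elim: m => [|m IH]; first by rewrite leqn0 => /eqP ->.
rewrite leq_eqVlt => /orP [/eqP ->//|hN].
by rewrite valS h // mul0r add0r IH.
Qed.

Lemma val_ge0 (a b : int) d m : - a + 1 <= b -> b <= -2 -> (forall i, 0 <= d i) ->
  0 <= val a b d m.
Proof.
move=> h1 h2 hd; apply: sumr_ge0 => i _.
by rewrite mulr_ge0 // (le_trans ler01 (T_ge1 a b _ h1 h2)).
Qed.

Fixpoint bwr (a b : int) (c m : nat) : seq int :=
  match m with
  | 0%N => [:: beta a b c]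
  | m'.+1 => beta a b c :: bwr a b c.+1 m'
  end.

Lemma bwr_const (a b : int) c m : (2 <= c)%N -> bwr a b c m = nseq m.+1 (a + b).
Proof.
elim: m c => [|m IH] c hc /=; rewrite ?IH //; last exact: leqW;
by rewrite /beta; case: c hc => [|[|c]].
Qed.

Lemma bwr0 (a b : int) m : bwr a b 0 m = bound_word a b m.
Proof.
case: m => [|[|m]] //=.
by rewrite bwr_const.
Qed.

Lemma dw_S (d : nat -> int) m : digit_word d m.+1 m.+1 = d m.+1 :: digit_word d m m.
Proof.
rewrite /digit_word.
have -> : iota 0 m.+2 = 0%N :: iota (1 + 0) m.+1 by [].
rewrite iotaDl /= subn0 -map_comp.
by congr (_ :: _); apply: eq_map => i /=; rewrite add1n subSS.
Qed.

Lemma dw_0 (d : nat -> int) j : digit_word d j 0 = [:: d j].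
Proof. by rewrite /digit_word /= subn0. Qed.

Lemma lex_cons (x y : int) s t : lex_le (x :: s) (y :: t) = (x < y) || (x == y) && lex_le s t.
Proof. by []. Qed.

Lemma ub (a b : int) (d : nat -> int) m : - a + 1 <= b -> b <= -2 ->
  forall c, (forall j, (j < m)%N -> lex_le (digit_word d j j) (bwr a b 0 j)) ->
  lex_le (digit_word d m m) (bwr a b c m) -> val a b d m <= vc a b c m.
Proof.
move=> h1 h2; elim: m => [|m IH] c Hadm Hlex.
  rewrite val0 /=; move: Hlex; rewrite dw_0 /= andbT.
  by case/orP => [/ltW|/eqP ->].
rewrite dw_S [bwr _ _ _ _.+1]/= lex_cons in Hlex; rewrite valS [vc _ _ _ _.+1]/=.
have hT := T_ge1 a b m.+1 h1 h2.
case/orP: Hlex => [hlt|/andP [/eqP he hl]].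
  have hv : val a b d m <= vc a b 0 m.
    by apply: IH => [j hj|]; [apply: Hadm; exact: ltnW|apply: Hadm].
  rewrite vc0 in hv.
  have hv2 := vc_ge0 a b m h1 h2 (fun i _ => le_trans ler01 (T_ge1 a b i h1 h2)) c.+1.
  have hdT : d m.+1 * Tseq a b m.+1 <= beta a b c * Tseq a b m.+1 - Tseq a b m.+1.
    rewrite -[X in _ - X]mul1r -mulrBl ler_wpM2r //; first by lia.
    by have := lt_le_trans ltr01 hT; lia.
  lia.
rewrite he lerD2l; apply: IH => // j hj; exact: Hadm (ltnW hj).
Qed.

Lemma lb (a b : int) (d : nat -> int) m : - a + 1 <= b -> b <= -2 ->
  (forall i, 0 <= d i) ->
  forall c, ~~ lex_le (digit_word d m m) (bwr a b c m) -> vc a b c m < val a b d m.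
Proof.
move=> h1 h2 hd; elim: m => [|m IH] c Hlex.
  rewrite val0 /=; move: Hlex; rewrite dw_0 /= andbT.
  by case: (ltrgtP (d 0%N) (beta a b c)).
rewrite dw_S [bwr _ _ _ _.+1]/= lex_cons in Hlex; rewrite valS [vc _ _ _ _.+1]/=.
have hT := T_ge1 a b m.+1 h1 h2.
case: (ltrgtP (d m.+1) (beta a b c)) Hlex => [//|hgt|heq] Hlex.
  have hv := val_ge0 a b d m h1 h2 hd.
  have hW := le_lt_trans (vc_le_W a b c m h1 h2) (W_lt a b m h1 h2).
  have hdT : beta a b c * Tseq a b m.+1 + Tseq a b m.+1 <= d m.+1 * Tseq a b m.+1.
    rewrite -[X in _ + X]mul1r -mulrDl ler_wpM2r //; first by lia.
    by have := lt_le_trans ltr01 hT; lia.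
  lia.
rewrite ?orFb ?andTb in Hlex.
have -> : d m.+1 = beta a b c by exact: heq.
by rewrite ltrD2l; apply: IH.
Qed.

Lemma lex_take (s t : seq int) n : lex_le s t -> size s = size t ->
  lex_le (take n s) (take n t).
Proof.
elim: s t n => [|x s IH] [|y t] [|n] //=.
move=> /orP [->//|/andP [/eqP -> h]] [hs].
by rewrite eqxx IH // orbT.
Qed.

Lemma dw_take (d : nat -> int) j k : (k <= j)%N ->
  digit_word d j k = take k.+1 (digit_word d j j).
Proof. by move=> h; rewrite /digit_word -map_take take_iota (minn_idPl _). Qed.

Lemma bw_take (a b : int) j k : (k <= j)%N ->
  bound_word a b k = take k.+1 (bound_word a b j).
Proof.
case: k => [|k]; first by case: j.
case: j => [//|j] hkj /=.
by rewrite take_nseq.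
Qed.

Lemma size_dw (d : nat -> int) j : size (digit_word d j j) = j.+1.
Proof. by rewrite size_map size_iota. Qed.

Lemma size_bw (a b : int) j : size (bound_word a b j) = j.+1.
Proof. by case: j => //= j; rewrite size_nseq. Qed.

Lemma adm_of (a b : int) (d : nat -> int) : (forall i, 0 <= d i) ->
  (forall j, lex_le (digit_word d j j) (bound_word a b j)) -> admissible a b d.
Proof.
move=> hd hl.
have H : forall j k, (k <= j)%N -> lex_le (digit_word d j k) (bound_word a b k).
  move=> j k hkj; rewrite (dw_take d j k hkj) (bw_take a b j k hkj).
  by apply: lex_take; rewrite ?size_dw ?size_bw.
split=> // i; rewrite hd /=.
have := H i 0%N (leq0n _); rewrite dw_0 /= andbT.
by case/orP => [/ltW|/eqP ->].
Qed.

Definition Tn (a b : int) k := `|Tseq a b k|%N.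

Lemma TnE (a b : int) k : - a + 1 <= b -> b <= -2 -> (Tn a b k)%:Z = Tseq a b k.
Proof. by move=> h1 h2; rewrite /Tn gez0_abs // (le_trans ler01 (T_ge1 a b k h1 h2)). Qed.

Fixpoint g (a b : int) (N n : nat) : nat -> int :=
  match N with
  | 0%N => fun i => if i == 0%N then n%:Z else 0
  | N'.+1 => fun i => if i == N then (n %/ Tn a b N)%:Z else g a b N' (n %% Tn a b N) i
  end.

Lemma g_ge0 (a b : int) N n i : 0 <= g a b N n i.
Proof. by elim: N n => [|N IH] n /=; case: ifP. Qed.

Lemma g_zero (a b : int) N n i : (N < i)%N -> g a b N n i = 0.
Proof.
elim: N n => [|N IH] n /=; first by case: i.
move=> h; rewrite ifN_eq; first by rewrite IH // ltnW.
by rewrite eq_sym neq_ltn h.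
Qed.

Lemma Tn_gt0 (a b : int) k : - a + 1 <= b -> b <= -2 -> (0 < Tn a b k)%N.
Proof.
move=> h1 h2; rewrite -ltz_nat TnE //; exact: lt_le_trans ltr01 (T_ge1 a b k h1 h2).
Qed.

Lemma g_val (a b : int) N n : - a + 1 <= b -> b <= -2 ->
  (n < Tn a b N.+1)%N -> val a b (g a b N n) N = n%:Z.
Proof.
move=> h1 h2; elim: N n => [|N IH] n hn; first by rewrite val0.
rewrite valS /= eqxx.
rewrite (@val_eq _ _ _ (g a b N (n %% Tn a b N.+1))); last first.
  by move=> i hi /=; rewrite ifN_eq // neq_ltn ltnS hi.
rewrite IH; last by rewrite ltn_pmod // Tn_gt0.
by rewrite -(TnE a b N.+1 h1 h2) -PoszM -PoszD -divn_eq.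
Qed.

Lemma g_lt (a b : int) N n : - a + 1 <= b -> b <= -2 ->
  (n < Tn a b N.+1)%N -> forall j, val a b (g a b N n) j < Tseq a b j.+1.
Proof.
move=> h1 h2; elim: N n => [|N IH] n hn j.
  rewrite (@val_tail a b _ 0%N j) ?val0 //; last by move=> i; exact: g_zero.
  apply: lt_le_trans (T_mono a b 1 j.+1 h1 h2 _) => //.
  by rewrite /= -(TnE a b 1 h1 h2) ltz_nat.
case: (leqP N.+1 j) => hj.
  rewrite (@val_tail a b _ N.+1 j) // ?g_val //; last by move=> i; exact: g_zero.
  apply: lt_le_trans (T_mono a b N.+2 j.+1 h1 h2 _) => //.
  by rewrite -(TnE a b N.+2 h1 h2) ltz_nat.
rewrite (@val_eq _ _ _ (g a b N (n %% Tn a b N.+1))); last first.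
  move=> i hi /=; rewrite ifN_eq // neq_ltn.
  by rewrite (leq_ltn_trans hi hj).
by apply: IH; rewrite ltn_pmod // Tn_gt0.
Qed.

Lemma adm_lex (a b : int) d : admissible a b d ->
  forall j, lex_le (digit_word d j j) (bwr a b 0 j).
Proof. by case=> _ h j; rewrite bwr0; apply: h. Qed.

Lemma uniq_val (a b : int) d1 d2 : - a + 1 <= b -> b <= -2 ->
  admissible a b d1 -> admissible a b d2 ->
  forall m, val a b d1 m = val a b d2 m -> forall i, (i <= m)%N -> d1 i = d2 i.
Proof.
move=> h1 h2 A1 A2; elim=> [|m IH] hv i.
  by rewrite leqn0 => /eqP ->; move: hv; rewrite !val0.
have bnd : forall d, admissible a b d -> 0 <= val a b d m < Tseq a b m.+1.
  move=> d A; apply/andP; split.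
    by apply: val_ge0 => // k; case: A => /(_ k) /andP [].
  have := @ub a b d m h1 h2 0%N (fun j _ => adm_lex a b d A j) (adm_lex a b d A m).
  rewrite vc0; lia.
have /andP [r1a r1b] := bnd _ A1; have /andP [r2a r2b] := bnd _ A2.
move: hv; rewrite !valS => hv.
have hT := T_ge1 a b m.+1 h1 h2.
have hx : d1 m.+1 = d2 m.+1.
  case: (ltrgtP (d1 m.+1) (d2 m.+1)) => // h.
    have : (d1 m.+1 + 1) * Tseq a b m.+1 <= d2 m.+1 * Tseq a b m.+1.
      by rewrite ler_wpM2r //; lia.
    rewrite mulrDl mul1r; lia.
  have : (d2 m.+1 + 1) * Tseq a b m.+1 <= d1 m.+1 * Tseq a b m.+1.
    by rewrite ler_wpM2r //; lia.
  rewrite mulrDl mul1r; lia.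
rewrite leq_eqVlt => /orP [/eqP -> //|hi].
apply: IH hi; move: hv; rewrite hx; lia.
Qed.

Theorem proposition2p2 (a b : int) (hab1 : - a + 1 <= b) (hab2 : b <= -2) :
  forall n : nat,
    (exists d : nat -> int, admissible a b d /\ represents a b d n) /\
    (forall d1 d2 : nat -> int,
        admissible a b d1 -> represents a b d1 n ->
        admissible a b d2 -> represents a b d2 n ->
        forall i, d1 i = d2 i).
Proof.
move=> n; split.
  have hn : (n < Tn a b n.+1)%N.
    by rewrite -ltz_nat TnE //; apply: T_gtn.
  exists (g a b n n); split.
    apply: adm_of => [i|j]; first exact: g_ge0.
    rewrite -bwr0; apply/negPn/negP => H.
    have := @lb a b (g a b n n) j hab1 hab2 (g_ge0 a b n n) 0%N H.
    have := g_lt a b n n hab1 hab2 hn j.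
    rewrite vc0; lia.
  exists n; split; first by move=> i; exact: g_zero.
  by rewrite -(g_val a b n n hab1 hab2 hn).
move=> d1 d2 A1 [N1 [z1 e1]] A2 [N2 [z2 e2]] i.
have v1 : val a b d1 (maxn N1 N2) = n%:Z.
  by rewrite (val_tail a b d1 N1 (maxn N1 N2) z1) ?leq_maxl // e1.
have v2 : val a b d2 (maxn N1 N2) = n%:Z.
  by rewrite (val_tail a b d2 N2 (maxn N1 N2) z2) ?leq_maxr // e2.
case: (leqP i (maxn N1 N2)) => hi.
  by apply: (uniq_val a b d1 d2 hab1 hab2 A1 A2 (maxn N1 N2)) => //; rewrite v1 v2.
rewrite gtn_max in hi; case/andP: hi => h1 h2.
by rewrite z1 // z2.
Qed.
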